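(* Let $\delta>0$, $\beta\ge1$ and let $k\ge3$ be an integer. For integers $n\ge k+1$ define \[\Delta_k^n=\big(n^\beta-(n-k)^\beta-2\big)^{-\delta}-\big((n+1)^\beta-(n-k)^\beta\big)^{-\delta}.\] Then $n\mapsto\Delta_k^n$ is non-increasing on $\{n\in\mathbb{N}:n\ge k+1\}$. *)

(* Defs.v *)
From Stdlib Require Import Reals.
Open Scope R_scope.

(* Delta_k^n = (n^beta - (n-k)^beta - 2)^(-delta) - ((n+1)^beta - (n-k)^beta)^(-delta).
   For n >= k+1, k >= 3, beta >= 1 all bases are positive, so Rpower is the
   usual real power. *)
Definition Delta_kn (delta beta : R) (k n : nat) : R :=
  Rpower (Rpower (INR n) beta - Rpower (INR n - INR k) beta - 2) (- delta)
  - Rpower (Rpower (INR n + 1) beta - Rpower (INR n - INR k) beta) (- delta).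

(* Main.v *)
Require Import Defs.
From Stdlib Require Import Reals Lra Lia Psatz.
Open Scope R_scope.

Lemma Rpow_pos (x y : R) : 0 < Rpower x y.
Proof. unfold Rpower; apply exp_pos. Qed.

Lemma dpow (f : R -> R) (x a l : R) :
  derivable_pt_lim f x l -> 0 < f x ->
  derivable_pt_lim (fun t => Rpower (f t) a) x (a * Rpower (f x) (a - 1) * l).
Proof.
  intros H Hp.
  replace (a * Rpower (f x) (a - 1) * l) with ((a * Rpower (f x) (a - 1)) * l) by ring.
  apply (derivable_pt_lim_comp f (fun t => Rpower t a)); auto.
  apply derivable_pt_lim_power; auto.
Qed.

Lemma dminus (f g : R -> R) (x a b : R) :
  derivable_pt_lim f x a -> derivable_pt_lim g x b ->
  derivable_pt_lim (fun t => f t - g t) x (a - b).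
Proof. intros. exact (derivable_pt_lim_minus f g x a b H H0). Qed.

Lemma dplus (f g : R -> R) (x a b : R) :
  derivable_pt_lim f x a -> derivable_pt_lim g x b ->
  derivable_pt_lim (fun t => f t + g t) x (a + b).
Proof. intros. exact (derivable_pt_lim_plus f g x a b H H0). Qed.

Lemma did x : derivable_pt_lim (fun t => t) x 1.
Proof. exact (derivable_pt_lim_id x). Qed.

Lemma dconst c x : derivable_pt_lim (fun _ => c) x 0.
Proof. exact (derivable_pt_lim_const c x). Qed.

Lemma convex_pow (g u x y : R) : 0 <= g -> 0 < u -> u < x -> x < y ->
  Rpower x (- g) * (y - u) <= (y - x) * Rpower u (- g) + (x - u) * Rpower y (- g).
Proof.
  intros Hg Hu Hux Hxy.
  set (f' := fun z => - g * Rpower z (- g - 1)).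
  assert (Hd : forall c, 0 < c -> derivable_pt_lim (fun z => Rpower z (- g)) c (f' c)).
  { intros c Hc. unfold f'. apply derivable_pt_lim_power; auto. }
  destruct (MVT_cor2 (fun z => Rpower z (- g)) f' u x Hux) as [c1 [E1 H1]].
  { intros c Hc. apply Hd; lra. }
  destruct (MVT_cor2 (fun z => Rpower z (- g)) f' x y Hxy) as [c2 [E2 H2]].
  { intros c Hc. apply Hd; lra. }
  assert (Hm : Rpower c2 (- g - 1) <= Rpower c1 (- g - 1)).
  { replace (- g - 1) with (- (g + 1)) by ring. rewrite !Rpower_Ropp.
    apply Rinv_le_contravar. apply Rpow_pos.
    apply Rle_Rpower_l; lra. }
  assert (Hf : f' c1 <= f' c2).
  { unfold f'. nra. }
  assert (0 <= (y - x) * (x - u) * (f' c2 - f' c1)).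
  { apply Rmult_le_pos; [apply Rmult_le_pos|]; lra. }
  nra.
Qed.

Lemma key (b x u y : R) : 1 <= b -> 0 < u -> u < x -> x < y ->
  (Rpower x (b - 1) - Rpower u (b - 1)) * (Rpower y b - Rpower u b)
  >= (Rpower x b - Rpower u b) * (Rpower y (b - 1) - Rpower u (b - 1)).
Proof.
  intros Hb Hu Hux Hxy.
  assert (E : forall z, 0 < z -> Rpower z b = Rpower z (b - 1) * z).
  { intros z Hz. rewrite <- (Rpower_1 z) at 3 by lra. rewrite <- Rpower_plus.
    f_equal. ring. }
  rewrite (E x), (E u), (E y) by lra.
  pose proof (convex_pow (b - 1) u x y ltac:(lra) Hu Hux Hxy) as C.
  rewrite !Rpower_Ropp in C.
  set (X := Rpower x (b - 1)) in *. set (U := Rpower u (b - 1)) in *.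
  set (Y := Rpower y (b - 1)) in *.
  assert (HX : 0 < X) by apply Rpow_pos.
  assert (HU : 0 < U) by apply Rpow_pos.
  assert (HY : 0 < Y) by apply Rpow_pos.
  assert (0 <= X * U * Y * ((y - x) * / U + (x - u) * / Y - X^0 * (y - u) * / X)).
  { apply Rmult_le_pos. apply Rmult_le_pos; [apply Rmult_le_pos|]; lra.
    simpl. lra. }
  replace (X * U * Y * ((y - x) * / U + (x - u) * / Y - X ^ 0 * (y - u) * / X))
    with (X * Y * (y - x) + U * X * (x - u) + U * Y * (u - y)) in H
    by (field; lra).
  nra.
Qed.

Lemma deq f x l l' : derivable_pt_lim f x l -> l = l' -> derivable_pt_lim f x l'.
Proof. intros H ->; exact H. Qed.

Theorem lemma3 (delta beta : R) (k : nat)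
  (hdelta : 0 < delta) (hbeta : 1 <= beta) (hk : (3 <= k)%nat) :
  forall n m : nat, (k + 1 <= n)%nat -> (n <= m)%nat ->
    Delta_kn delta beta k m <= Delta_kn delta beta k n.
Proof.
  intros n m Hn Hnm.
  set (K := INR k).
  assert (HK : 3 <= K) by (unfold K; replace 3 with (INR 3) by (simpl; ring); apply le_INR; lia).
  set (A := fun x => Rpower x beta - Rpower (x - K) beta - 2).
  set (B := fun x => Rpower (x + 1) beta - Rpower (x - K) beta).
  set (A' := fun x => beta * Rpower x (beta - 1) - beta * Rpower (x - K) (beta - 1)).
  set (B' := fun x => beta * Rpower (x + 1) (beta - 1) - beta * Rpower (x - K) (beta - 1)).
  set (D := fun x => Rpower (A x) (- delta) - Rpower (B x) (- delta)).
  set (dD := fun x => (- delta) * Rpower (A x) (- delta - 1) * A' x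
                      - (- delta) * Rpower (B x) (- delta - 1) * B' x).
  assert (Facts : forall c, K + 1 <= c ->
     0 < A c /\ A c < B c /\ 0 <= A' c /\ 0 <= B' c /\ A' c * B c >= A c * B' c).
  { intros c Hc.
    assert (E : forall z, 0 < z -> Rpower z beta = Rpower z (beta - 1) * z).
    { intros z Hz. rewrite <- (Rpower_1 z) at 3 by lra. rewrite <- Rpower_plus.
      f_equal. ring. }
    pose proof (key beta c (c - K) (c + 1) hbeta ltac:(lra) ltac:(lra) ltac:(lra)) as Hk.
    assert (HU1 : 1 <= Rpower (c - K) (beta - 1)).
    { pose proof (Rle_Rpower (c - K) 0 (beta - 1) ltac:(lra) ltac:(lra)) as HH.
      rewrite Rpower_O in HH by lra. exact HH. }
    assert (HUX : Rpower (c - K) (beta - 1) <= Rpower c (beta - 1)).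
    { apply Rle_Rpower_l; lra. }
    assert (HXY : Rpower c (beta - 1) <= Rpower (c + 1) (beta - 1)).
    { apply Rle_Rpower_l; lra. }
    unfold A, B, A', B'. rewrite (E c), (E (c - K)), (E (c + 1)) in * by lra.
    set (X := Rpower c (beta - 1)) in *. set (U := Rpower (c - K) (beta - 1)) in *.
    set (Y := Rpower (c + 1) (beta - 1)) in *.
    split; [nra|]. split; [nra|]. split; [nra|]. split; [nra|].
    nra. }
  assert (Hd : forall c, K + 1 <= c -> derivable_pt_lim D c (dD c)).
  { intros c Hc. destruct (Facts c Hc) as [HA [HAB _]].
    unfold D, dD. apply dminus.
    - apply dpow; [|exact HA]. unfold A, A'.
      eapply deq. apply dminus; [apply dminus|apply dconst].
      apply derivable_pt_lim_power; lra.
      apply dpow; [apply dminus; [apply did|apply dconst]|lra].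
      cbv beta; ring.
    - apply dpow; [|lra]. unfold B, B'.
      eapply deq. apply dminus.
      apply dpow; [apply dplus; [apply did|apply dconst]|lra].
      apply dpow; [apply dminus; [apply did|apply dconst]|lra].
      cbv beta; ring. }
  assert (Hneg : forall c, K + 1 <= c -> dD c <= 0).
  { intros c Hc. destruct (Facts c Hc) as [HA [HAB [HA' [HB' Hkey]]]].
    assert (EA : Rpower (A c) (- delta - 1) * A c = Rpower (A c) (- delta)).
    { rewrite <- (Rpower_1 (A c)) at 2 by lra. rewrite <- Rpower_plus. f_equal; ring. }
    assert (EB : Rpower (B c) (- delta - 1) * B c = Rpower (B c) (- delta)).
    { rewrite <- (Rpower_1 (B c)) at 2 by lra. rewrite <- Rpower_plus. f_equal; ring. }
    assert (HP : Rpower (B c) (- delta) <= Rpower (A c) (- delta)).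
    { rewrite !Rpower_Ropp. apply Rinv_le_contravar. apply Rpow_pos.
      apply Rle_Rpower_l; lra. }
    set (RA := Rpower (A c) (- delta - 1)) in *.
    set (RB := Rpower (B c) (- delta - 1)) in *.
    set (PA := Rpower (A c) (- delta)) in *.
    set (PB := Rpower (B c) (- delta)) in *.
    assert (HPB : 0 < PB) by apply Rpow_pos.
    assert (HRA : 0 < RA) by apply Rpow_pos.
    assert (HRB : 0 < RB) by apply Rpow_pos.
    assert (H1 : 0 <= (PA - PB) * (A' c * B c)).
    { apply Rmult_le_pos; nra. }
    assert (H2 : 0 <= PB * (A' c * B c - A c * B' c)).
    { apply Rmult_le_pos; lra. }
    assert (H3 : RB * B' c <= RA * A' c).
    { apply (Rmult_le_reg_r (A c * B c)). nra.
      replace (RB * B' c * (A c * B c)) with (PB * (A c * B' c)) by (rewrite <- EB; ring).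
      replace (RA * A' c * (A c * B c)) with (PA * (A' c * B c)) by (rewrite <- EA; ring).
      nra. }
    unfold dD. fold RA RB. assert (0 <= delta * (RA * A' c - RB * B' c)) by (apply Rmult_le_pos; lra). nra. }
  unfold Delta_kn. fold K.
  change (D (INR m) <= D (INR n)).
  assert (Hn' : K + 1 <= INR n).
  { unfold K. rewrite <- S_INR. apply le_INR; lia. }
  destruct (proj1 (Nat.lt_eq_cases n m) Hnm) as [Hlt|Heq]; [|subst; lra].
  assert (Hlt' : INR n < INR m) by (apply lt_INR; exact Hlt).
  destruct (MVT_cor2 D dD (INR n) (INR m) Hlt') as [c [Ec Hc]].
  { intros c Hc. apply Hd; lra. }
  pose proof (Hneg c ltac:(lra)).
  nra.
Qed.
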